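(* Let $I\subset\mathbb{R}$ be an open interval and let $\mathcal{L}:(0,\infty)\times I\to\mathbb{R}$, $(X,\phi)\mapsto\mathcal{L}(X,\phi)$, be a smooth function with $\mathcal{L}_X\neq 0$ everywhere. Define $p=\mathcal{L}$ and $\rho=2X\mathcal{L}_X-\mathcal{L}$, regarded as functions of the two independent variables $(X,\phi)$. Then the following are equivalent: (i) (isentropy) there exists a smooth nowhere-vanishing function $n:(0,\infty)\times I\to\mathbb{R}$ such that the Gibbs relation with $\mathrm{d}(s/n)=0$, namely $$\mathrm{d}\!\left(\frac{\rho+p}{n}\right)=\frac{1}{n}\,\mathrm{d}p \quad\Longleftrightarrow\quad \mathrm{d}\rho-(\rho+p)\frac{\mathrm{d}n}{n}=0,$$ holds identically as an equality of differential $1$-forms in $(X,\phi)$, i.e. $\rho_X=(\rho+p)\,n_X/n$ and $\rho_\phi=(\rho+p)\,n_\phi/n$; (ii) there exist a smooth function $f:I\to\mathbb{R}$ and a smooth function $G:(0,\infty)\to\mathbb{R}$ such that $\mathcal{L}(X,\phi)=G(\tilde X)$ with $\tilde X=e^{-2f(\phi)}X$; equivalently, after the field redefinition $\tilde\phi$ defined by $\tilde\phi_{,\mu}=e^{-f(\phi)}\phi_{,\mu}$ (so that $\tilde X=\tfrac12 g^{\mu\nu}\tilde\phi_{,\mu}\tilde\phi_{,\nu}$), the Lagrangian depends only on the kinetic term $\tilde X$ and not explicitly on $\tilde\phi$. Moreover, in this case $n$ is necessarily of the form $n=e^{f(\phi)}\sqrt{2X}\,\mathcal{L}_X$ (for $f$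 as in (ii), up to sign), and $-\mathcal{L}_\phi=2X\mathcal{L}_X f'(\phi)$; in terms of $\tilde X$ one has $n=\sqrt{2\tilde X}\,G'(\tilde X)$.
   Context: A scalar field $\phi$ on a spacetime with metric $g_{\mu\nu}$ of signature $(+,-,-,-)$ has action $S=\int\mathcal{L}(X,\phi)\sqrt{-g}\,\mathrm{d}^4x$ with kinetic term $X=\tfrac12 g^{\mu\nu}\phi_{,\mu}\phi_{,\nu}>0$; subscripts $X,\phi$ denote partial derivatives. Its stress tensor $T_{\mu\nu}=\mathcal{L}_X\phi_{,\mu}\phi_{,\nu}-\mathcal{L}g_{\mu\nu}$ is that of a perfect fluid with pressure $p=\mathcal{L}$, energy density $\rho=2X\mathcal{L}_X-\mathcal{L}$ and four-velocity $u_\mu=\phi_{,\mu}/\sqrt{2X}$. Thermodynamically, $n$ denotes the particle number density, $s$ the entropy density, and Gibbs' relation reads $\mathrm{d}((\rho+p)/n)=T\,\mathrm{d}(s/n)+\mathrm{d}p/n$; the flow is called isentropic when $\mathrm{d}(s/n)=0$. *)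

(* Defs.v *)
From Stdlib Require Import Reals Lra ClassicalEpsilon.
Open Scope R_scope.

Definition is_open_intvl (I : R -> Prop) : Prop :=
  (forall x y z, I x -> I z -> x <= y -> y <= z -> I y) /\
  (forall x, I x -> exists e, 0 < e /\ forall y, Rabs (y - x) < e -> I y).

Definition dom2 (I : R -> Prop) (X phi : R) : Prop := 0 < X /\ I phi.

Definition pos (X : R) : Prop := 0 < X.

Definition continuous2_at (F : R -> R -> R) (X phi : R) : Prop :=
  forall eps, 0 < eps -> exists delta, 0 < delta /\
    forall x y, Rabs (x - X) < delta -> Rabs (y - phi) < delta ->
      Rabs (F x y - F X phi) < eps.

Definition smooth1 (D : R -> Prop) (f : R -> R) : Prop :=
  exists F : nat -> R -> R, F O = f /\
    forall k x, D x -> derivable_pt_lim (F k) x (F (S k) x).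

(* C^oo on an open set D of R^2: all partial derivatives F i j
   (i times in the first variable, j times in the second) exist and are
   jointly continuous on D. *)
Definition smooth2 (D : R -> R -> Prop) (L : R -> R -> R) : Prop :=
  exists F : nat -> nat -> R -> R -> R, F O O = L /\
    forall i j X phi, D X phi ->
      continuous2_at (F i j) X phi /\
      derivable_pt_lim (fun x => F i j x phi) X (F (S i) j X phi) /\
      derivable_pt_lim (fun y => F i j X y) phi (F i (S j) X phi).

(* Derivatives (the value of the derivative wherever it exists). *)
Definition deriv1 (f : R -> R) (x : R) : R :=
  epsilon (inhabits 0) (fun l => derivable_pt_lim f x l).
Definition dX (F : R -> R -> R) (X phi : R) : R :=
  epsilon (inhabits 0) (fun l => derivable_pt_lim (fun x => F x phi) X l).
Definition dphi (F : R -> R -> R) (X phi : R) : R :=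
  epsilon (inhabits 0) (fun l => derivable_pt_lim (fun y => F X y) phi l).

Definition pres (L : R -> R -> R) : R -> R -> R := L.
Definition rho (L : R -> R -> R) : R -> R -> R :=
  fun X phi => 2 * X * dX L X phi - L X phi.

Definition isentropic_n (I : R -> Prop) (L n : R -> R -> R) : Prop :=
  smooth2 (dom2 I) n /\
  (forall X phi, dom2 I X phi -> n X phi <> 0) /\
  (forall X phi, dom2 I X phi ->
     dX (rho L) X phi = (rho L X phi + pres L X phi) * dX n X phi / n X phi /\
     dphi (rho L) X phi = (rho L X phi + pres L X phi) * dphi n X phi / n X phi).

Definition reduces_to (I : R -> Prop) (L : R -> R -> R) (f G : R -> R) : Prop :=
  smooth1 I f /\ smooth1 pos G /\
  (forall X phi, dom2 I X phi -> L X phi = G (exp (-2 * f phi) * X)).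

(* Main.v *)
Require Import Defs.
From Stdlib Require Import Reals.
From Stdlib Require Import Lra ClassicalEpsilon Classical FunctionalExtensionality Ranalysis5.
From Coquelicot Require Import Coquelicot.
Require Import Defs.
Open Scope R_scope.

Lemma dX_eq F X phi l : derivable_pt_lim (fun x => F x phi) X l -> dX F X phi = l.
Proof.
  intro H. unfold dX. apply (uniqueness_limite (fun x => F x phi) X); [|exact H].
  apply epsilon_spec. exists l; exact H.
Qed.
Lemma dphi_eq F X phi l : derivable_pt_lim (fun y => F X y) phi l -> dphi F X phi = l.
Proof.
  intro H. unfold dphi. apply (uniqueness_limite (fun y => F X y) phi); [|exact H].
  apply epsilon_spec. exists l; exact H.
Qed.
Lemma deriv1_eq f x l : derivable_pt_lim f x l -> deriv1 f x = l.
Proof.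
  intro H. unfold deriv1. apply (uniqueness_limite f x); [|exact H].
  apply epsilon_spec. exists l; exact H.
Qed.

Lemma loc_deriv f g x l :
  (exists d, 0 < d /\ forall y, Rabs (y - x) < d -> f y = g y) ->
  derivable_pt_lim g x l -> derivable_pt_lim f x l.
Proof.
  intros [d [Hd Hfg]] H eps Heps.
  destruct (H eps Heps) as [del Hdel].
  assert (Hm : 0 < Rmin d del) by (apply Rmin_glb_lt; [lra| apply cond_pos]).
  exists (mkposreal _ Hm). intros h Hh0 Hh. simpl in Hh.
  rewrite (Hfg (x + h)), (Hfg x).
  - apply Hdel; auto. eapply Rlt_le_trans; [exact Hh|apply Rmin_r].
  - rewrite Rminus_eq_0, Rabs_R0; lra.
  - replace (x + h - x) with h by ring. eapply Rlt_le_trans; [exact Hh|apply Rmin_l].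
Qed.

Lemma MVT_gen2 f f' a b :
  (forall c, Rmin a b <= c <= Rmax a b -> derivable_pt_lim f c (f' c)) ->
  exists c, Rmin a b <= c <= Rmax a b /\ f b - f a = f' c * (b - a).
Proof.
  intro H. destruct (Rtotal_order a b) as [Hab|[Hab|Hab]].
  - destruct (MVT_cor2 f f' a b Hab) as [c [Hc1 Hc2]].
    + intros c Hc. apply H. rewrite Rmin_left, Rmax_right by lra. lra.
    + exists c. rewrite Rmin_left, Rmax_right by lra. split; [lra|exact Hc1].
  - subst. exists b. rewrite Rmin_left, Rmax_left by lra. split; [lra|ring].
  - destruct (MVT_cor2 f f' b a Hab) as [c [Hc1 Hc2]].
    + intros c Hc. apply H. rewrite Rmin_right, Rmax_left by lra. lra.
    + exists c. rewrite Rmin_right, Rmax_left by lra. split; [lra|]. 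
      replace (f b - f a) with (- (f a - f b)) by ring. rewrite Hc1. ring.
Qed.

Definition convex (S : R -> Prop) := forall x y z, S x -> S z -> x <= y -> y <= z -> S y.

Lemma const_on_convex S f : convex S ->
  (forall x, S x -> derivable_pt_lim f x 0) -> forall a b, S a -> S b -> f a = f b.
Proof.
  intros HS H a b Ha Hb.
  destruct (MVT_gen2 f (fun _ => 0) a b) as [c [_ Hc]].
  - intros c Hc. apply H. destruct (Rle_dec a b).
    + rewrite Rmin_left, Rmax_right in Hc by lra. apply (HS a c b); tauto.
    + rewrite Rmin_right, Rmax_left in Hc by lra. apply (HS b c a); tauto.
  - lra.
Qed.

Lemma c2_to F X phi : continuous2_at F X phi -> continuity_2d_pt F X phi.
Proof.
  intros H eps. destruct (H eps (cond_pos eps)) as [d [Hd Hd2]].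
  exists (mkposreal d Hd). intros u v Hu Hv. apply Hd2; auto.
Qed.
Lemma c2_from F X phi : continuity_2d_pt F X phi -> continuous2_at F X phi.
Proof.
  intros H eps He. destruct (H (mkposreal eps He)) as [d Hd].
  exists d. split; [apply cond_pos|]. intros; apply Hd; auto.
Qed.

Lemma diff_from_partials f fx fy x y :
  (exists d, 0 < d /\ forall u v, Rabs (u - x) < d -> Rabs (v - y) < d ->
      derivable_pt_lim (fun z => f z v) u (fx u v)) ->
  continuity_2d_pt fx x y ->
  derivable_pt_lim (fun z => f x z) y fy ->
  differentiable_pt_lim f x y (fx x y) fy.
Proof.
  intros [d0 [Hd0 Hder]] Hc Hy eps.
  assert (He2 : 0 < eps / 2) by (generalize (cond_pos eps); lra).
  destruct (Hc (mkposreal _ He2)) as [d1 Hd1].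
  destruct (Hy (eps/2) He2) as [d2 Hd2].
  assert (Hm : 0 < Rmin d0 (Rmin d1 d2)).
  { apply Rmin_glb_lt; [lra|apply Rmin_glb_lt; apply cond_pos]. }
  exists (mkposreal _ Hm). intros u v Hu Hv. simpl in Hu, Hv.
  assert (Hu0 : Rabs (u - x) < d0) by (eapply Rlt_le_trans; [exact Hu|apply Rmin_l]).
  assert (Hv0 : Rabs (v - y) < d0) by (eapply Rlt_le_trans; [exact Hv|apply Rmin_l]).
  assert (Hu1 : Rabs (u - x) < d1) by
      (eapply Rlt_le_trans; [exact Hu|eapply Rle_trans; [apply Rmin_r|apply Rmin_l]]).
  assert (Hv1 : Rabs (v - y) < d1) by
      (eapply Rlt_le_trans; [exact Hv|eapply Rle_trans; [apply Rmin_r|apply Rmin_l]]).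
  assert (Hv2 : Rabs (v - y) < d2) by
      (eapply Rlt_le_trans; [exact Hv|eapply Rle_trans; [apply Rmin_r|apply Rmin_r]]).
  destruct (MVT_gen2 (fun z => f z v) (fun z => fx z v) x u) as [c [Hc1 Hc2]].
  { intros c Hc'. apply Hder; [|exact Hv0].
    apply Rle_lt_trans with (Rabs (u - x)); [|exact Hu0].
    unfold Rmin, Rmax in Hc'. destruct (Rle_dec x u);
      unfold Rabs; destruct (Rcase_abs (c - x)), (Rcase_abs (u - x)); lra. }
  assert (HA : Rabs (f u v - f x v - fx x y * (u - x)) <= eps/2 * Rabs (u - x)).
  { rewrite Hc2. replace (fx c v * (u - x) - fx x y * (u - x)) with
      ((fx c v - fx x y) * (u - x)) by ring.
    rewrite Rabs_mult. apply Rmult_le_compat_r; [apply Rabs_pos|].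
    left. apply (Hd1 c v); [|exact Hv1].
    apply Rle_lt_trans with (Rabs (u - x)); [|exact Hu1].
    unfold Rmin, Rmax in Hc1. destruct (Rle_dec x u);
      unfold Rabs; destruct (Rcase_abs (c - x)), (Rcase_abs (u - x)); lra. }
  assert (HB : Rabs (f x v - f x y - fy * (v - y)) <= eps/2 * Rabs (v - y)).
  { destruct (Req_dec v y) as [E|E].
    - subst. rewrite !Rminus_eq_0. rewrite Rmult_0_r, Rminus_0_r, Rabs_R0, Rmult_0_r. lra.
    - assert (Hh : v - y <> 0) by lra.
      specialize (Hd2 (v - y) Hh Hv2). replace (y + (v - y)) with v in Hd2 by ring.
      replace (f x v - f x y - fy * (v - y)) with
        (((f x v - f x y) / (v - y) - fy) * (v - y)) by (field; exact Hh).
      rewrite Rabs_mult. apply Rmult_le_compat_r; [apply Rabs_pos|lra]. }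
  replace (f u v - f x y - (fx x y * (u - x) + fy * (v - y))) with
    ((f u v - f x v - fx x y * (u - x)) + (f x v - f x y - fy * (v - y))) by ring.
  eapply Rle_trans; [apply Rabs_triang|].
  generalize (Rmax_l (Rabs (u - x)) (Rabs (v - y))) (Rmax_r (Rabs (u - x)) (Rabs (v - y))).
  generalize (cond_pos eps). nra.
Qed.

Lemma smooth_coind (D : R -> Prop) (P : (R -> R) -> Prop) :
  (forall h, P h -> exists h', P h' /\ forall x, D x -> derivable_pt_lim h x (h' x)) ->
  forall h, P h -> smooth1 D h.
Proof.
  intros H h Hh.
  assert (d : forall s : {g : R -> R | P g}, {s' : {g : R -> R | P g} |
      forall x, D x -> derivable_pt_lim (proj1_sig s) x (proj1_sig s' x)}).
  { intros [g Hg]. destruct (constructive_indefinite_description _ (H g Hg)) as [g' [Hg' Hd]].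
    exists (exist _ g' Hg'). exact Hd. }
  exists (fun k => proj1_sig (Nat.iter k (fun s => proj1_sig (d s)) (exist _ h Hh))).
  split; [reflexivity|]. intros k x Dx. simpl. apply (proj2_sig (d _)). exact Dx.
Qed.

Inductive Cl (B : (R -> R) -> Prop) : (R -> R) -> Prop :=
 | Cl_base h : B h -> Cl B h
 | Cl_add a b : Cl B a -> Cl B b -> Cl B (fun x => a x + b x)
 | Cl_mul a b : Cl B a -> Cl B b -> Cl B (fun x => a x * b x).

Lemma Cl_smooth D B :
  (forall h, B h -> exists h', Cl B h' /\ forall x, D x -> derivable_pt_lim h x (h' x)) ->
  forall h, Cl B h -> smooth1 D h.
Proof.
  intro H. apply smooth_coind. intros h Hh; induction Hh.
  - apply H; auto.
  - destruct IHHh1 as [a' [Ha Hda]], IHHh2 as [b' [Hb Hdb]].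
    exists (fun x => a' x + b' x). split; [apply Cl_add; auto|].
    intros x Dx. exact (derivable_pt_lim_plus a b x _ _ (Hda x Dx) (Hdb x Dx)).
  - destruct IHHh1 as [a' [Ha Hda]], IHHh2 as [b' [Hb Hdb]].
    exists (fun x => a' x * b x + a x * b' x). split; [apply Cl_add; apply Cl_mul; auto|].
    intros x Dx. exact (derivable_pt_lim_mult a b x _ _ (Hda x Dx) (Hdb x Dx)).
Qed.

Lemma smooth1_shift D h F : F O = h -> (forall k x, D x -> derivable_pt_lim (F k) x (F (S k) x)) ->
  smooth1 D (F 1%nat).
Proof. intros _ H. exists (fun k => F (S k)). split; auto. Qed.

Lemma smooth1_deriv D h : smooth1 D h -> exists h', smooth1 D h' /\ forall x, D x -> derivable_pt_lim h x (h' x).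
Proof.
  intros [F [H0 H]]. exists (F 1%nat). split.
  - exists (fun k => F (S k)). split; auto.
  - subst h. apply H.
Qed.

Definition Bc (D : R -> Prop) (h : R -> R) : Prop :=
  smooth1 D h \/ exists (E : R -> Prop) g u, smooth1 E g /\ smooth1 D u /\
     (forall x, D x -> E (u x)) /\ h = (fun x => g (u x)).

Lemma Bc_smooth D h : Cl (Bc D) h -> smooth1 D h.
Proof.
  apply Cl_smooth. intros h0 [Hs|[E [g [u [Hg [Hu [HE ->]]]]]]].
  - destruct (smooth1_deriv _ _ Hs) as [h1 [Hh1 Hd]]. exists h1. split; auto.
    constructor. left. exact Hh1.
  - destruct (smooth1_deriv _ _ Hg) as [g' [Hg' Hdg]].
    destruct (smooth1_deriv _ _ Hu) as [u' [Hu' Hdu]].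
    exists (fun x => g' (u x) * u' x). split.
    + apply Cl_mul; constructor; [right; exists E, g', u; auto|left; auto].
    + intros x Dx. exact (derivable_pt_lim_comp u g x _ _ (Hdu x Dx) (Hdg _ (HE x Dx))).
Qed.

Lemma smooth1_add D a b : smooth1 D a -> smooth1 D b -> smooth1 D (fun x => a x + b x).
Proof. intros; apply Bc_smooth; apply Cl_add; constructor; left; auto. Qed.
Lemma smooth1_mul D a b : smooth1 D a -> smooth1 D b -> smooth1 D (fun x => a x * b x).
Proof. intros; apply Bc_smooth; apply Cl_mul; constructor; left; auto. Qed.
Lemma smooth1_comp D E g u : smooth1 E g -> smooth1 D u -> (forall x, D x -> E (u x)) ->
  smooth1 D (fun x => g (u x)).
Proof. intros; apply Bc_smooth; constructor; right; exists E, g, u; auto. Qed.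
Lemma smooth1_const D c : smooth1 D (fun _ => c).
Proof.
  exists (fun k => match k with O => fun _ => c | S _ => fun _ => 0 end). split; auto.
  intros [|k] x _; apply derivable_pt_lim_const.
Qed.
Lemma smooth1_id D : smooth1 D (fun x => x).
Proof.
  exists (fun k => match k with O => fun x => x | 1%nat => fun _ => 1 | _ => fun _ => 0 end).
  split; auto. intros [|[|k]] x _; [apply derivable_pt_lim_id|apply derivable_pt_lim_const|apply derivable_pt_lim_const].
Qed.
Lemma smooth1_exp D : smooth1 D exp.
Proof. exists (fun _ => exp). split; auto. intros; apply derivable_pt_lim_exp. Qed.
Lemma smooth1_sub D D' f : (forall x, D' x -> D x) -> smooth1 D f -> smooth1 D' f.
Proof. intros H [F [H0 H1]]. exists F. split; auto. Qed.

Definition openS (D : R -> Prop) := forall x, D x -> exists d, 0 < d /\ forall y, Rabs (y - x) < d -> D y.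

Lemma smooth1_ext D f g : openS D -> (forall x, D x -> f x = g x) -> smooth1 D g -> smooth1 D f.
Proof.
  intros HD Hfg [F [H0 H1]].
  exists (fun k => match k with O => f | S k' => F (S k') end). split; auto.
  intros [|k] x Dx; [|apply H1; auto].
  apply loc_deriv with (F O).
  - destruct (HD x Dx) as [d [Hd Hd']]. exists d; split; auto. intros y Hy. rewrite H0. apply Hfg, Hd'; auto.
  - apply H1; auto.
Qed.

Lemma dinv f x l : derivable_pt_lim f x l -> f x <> 0 ->
  derivable_pt_lim (fun y => / f y) x (- l / f x ^ 2).
Proof.
  intros H Hn. pose proof (derivable_pt_lim_div (fun _ => 1) f x 0 l (derivable_pt_lim_const 1 x) H Hn) as H2.
  replace (fun y => / f y) with (div_fct (fun _ => 1) f)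
    by (apply functional_extensionality; intro; unfold div_fct, Rdiv; ring).
  replace (- l / f x ^ 2) with ((0 * f x - l * 1) / (f x)²) by (unfold Rsqr; field; auto). exact H2.
Qed.

Definition Bi (h : R -> R) : Prop := h = (fun x => / x) \/ exists c, h = (fun _ => c).

Lemma smooth1_inv : smooth1 (fun x => x <> 0) (fun x => / x).
Proof.
  apply (Cl_smooth _ Bi); [|constructor; left; reflexivity].
  intros h [->|[c ->]].
  - exists (fun x => (-1) * (/ x * / x)). split.
    + apply Cl_mul; [constructor; right; eauto|apply Cl_mul; constructor; left; auto].
    + intros x Hx. pose proof (dinv (fun x => x) x 1 (derivable_pt_lim_id x) Hx) as H.
      replace ((-1) * (/ x * / x)) with (- 1 / x ^ 2) by (field; auto). exact H.
  - exists (fun _ => 0). split; [constructor; right; eauto|]. intros; apply derivable_pt_lim_const.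
Qed.

Lemma smooth1_ln : smooth1 pos ln.
Proof.
  destruct smooth1_inv as [F [H0 H1]].
  exists (fun k => match k with O => ln | S k' => F k' end). split; auto.
  intros [|k] x Dx; unfold pos in Dx.
  - rewrite H0. apply derivable_pt_lim_ln; auto.
  - apply H1. lra.
Qed.

Definition Bs (h : R -> R) : Prop := h = sqrt \/ h = (fun x => / sqrt x) \/ exists c, h = (fun _ => c).

Lemma smooth1_sqrt : smooth1 pos sqrt.
Proof.
  apply (Cl_smooth _ Bs); [|constructor; left; reflexivity].
  intros h [->|[->|[c ->]]].
  - exists (fun x => / 2 * / sqrt x). split.
    + apply Cl_mul; constructor; [right; right; eauto|right; left; auto].
    + intros x Hx. unfold pos in Hx. pose proof (derivable_pt_lim_sqrt x Hx) as H.
      assert (0 < sqrt x) by (apply sqrt_lt_R0; auto).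
      replace (/ 2 * / sqrt x) with (/ (2 * sqrt x)) by (field; lra). exact H.
  - exists (fun x => (- / 2) * (/ sqrt x * (/ sqrt x * / sqrt x))). split.
    + apply Cl_mul; [constructor; right; right; eauto|].
      apply Cl_mul; [constructor; right; left; auto|apply Cl_mul; constructor; right; left; auto].
    + intros x Hx. unfold pos in Hx.
      assert (Hs0 : 0 < sqrt x) by (apply sqrt_lt_R0; auto).
      pose proof (dinv sqrt x _ (derivable_pt_lim_sqrt x Hx)) as H.
      assert (Hn : sqrt x <> 0) by lra. specialize (H Hn).
      replace ((- / 2) * (/ sqrt x * (/ sqrt x * / sqrt x))) with (- / (2 * sqrt x) / sqrt x ^ 2)
        by (field; lra). exact H.
  - exists (fun _ => 0). split; [constructor; right; right; eauto|]. intros; apply derivable_pt_lim_const.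
Qed.

Inductive ex : Type :=
 | E2 (F : nat -> nat -> R -> R -> R) (i j : nat)
 | EX (B : nat -> R -> R) (k : nat)
 | EP (A : nat -> R -> R) (k : nat)
 | EC (c : R)
 | EAdd (a b : ex)
 | EMul (a b : ex).

Fixpoint ev (e : ex) : R -> R -> R :=
  match e with
  | E2 F i j => F i j
  | EX B k => fun X _ => B k X
  | EP A k => fun _ y => A k y
  | EC c => fun _ _ => c
  | EAdd a b => fun X y => ev a X y + ev b X y
  | EMul a b => fun X y => ev a X y * ev b X y
  end.

Fixpoint dx (e : ex) : ex :=
  match e with
  | E2 F i j => E2 F (S i) j
  | EX B k => EX B (S k)
  | EP _ _ => EC 0
  | EC _ => EC 0
  | EAdd a b => EAdd (dx a) (dx b)
  | EMul a b => EAdd (EMul (dx a) b) (EMul a (dx b))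
  end.

Fixpoint dp (e : ex) : ex :=
  match e with
  | E2 F i j => E2 F i (S j)
  | EX _ _ => EC 0
  | EP A k => EP A (S k)
  | EC _ => EC 0
  | EAdd a b => EAdd (dp a) (dp b)
  | EMul a b => EAdd (EMul (dp a) b) (EMul a (dp b))
  end.

Section S2.
Variable I : R -> Prop.
Hypothesis HIo : openS I.

Fixpoint ok (e : ex) : Prop :=
  match e with
  | E2 F _ _ => forall i j X y, dom2 I X y -> continuous2_at (F i j) X y /\
       derivable_pt_lim (fun x => F i j x y) X (F (S i) j X y) /\
       derivable_pt_lim (fun z => F i j X z) y (F i (S j) X y)
  | EX B _ => forall k X, 0 < X -> derivable_pt_lim (B k) X (B (S k) X)
  | EP A _ => forall k y, I y -> derivable_pt_lim (A k) y (A (S k) y)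
  | EC _ => True
  | EAdd a b => ok a /\ ok b
  | EMul a b => ok a /\ ok b
  end.

Lemma ok_dx e : ok e -> ok (dx e).
Proof. induction e; simpl; tauto. Qed.
Lemma ok_dp e : ok e -> ok (dp e).
Proof. induction e; simpl; tauto. Qed.

Lemma der_dx e : ok e -> forall X y, dom2 I X y ->
  derivable_pt_lim (fun x => ev e x y) X (ev (dx e) X y).
Proof.
  induction e; simpl; intros Ho X y Hd.
  - apply Ho; auto.
  - apply Ho. apply Hd.
  - apply derivable_pt_lim_const.
  - apply derivable_pt_lim_const.
  - destruct Ho. exact (derivable_pt_lim_plus _ _ X _ _ (IHe1 H X y Hd) (IHe2 H0 X y Hd)).
  - destruct Ho. exact (derivable_pt_lim_mult _ _ X _ _ (IHe1 H X y Hd) (IHe2 H0 X y Hd)).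
Qed.

Lemma der_dp e : ok e -> forall X y, dom2 I X y ->
  derivable_pt_lim (fun z => ev e X z) y (ev (dp e) X y).
Proof.
  induction e; simpl; intros Ho X y Hd.
  - apply Ho; auto.
  - apply derivable_pt_lim_const.
  - apply Ho. apply Hd.
  - apply derivable_pt_lim_const.
  - destruct Ho. exact (derivable_pt_lim_plus _ _ y _ _ (IHe1 H X y Hd) (IHe2 H0 X y Hd)).
  - destruct Ho. exact (derivable_pt_lim_mult _ _ y _ _ (IHe1 H X y Hd) (IHe2 H0 X y Hd)).
Qed.

Lemma cont_ev e : ok e -> forall X y, dom2 I X y -> continuity_2d_pt (ev e) X y.
Proof.
  induction e; simpl; intros Ho X y Hd.
  - apply c2_to. apply Ho; auto.
  - apply (continuity_1d_2d_pt_comp (B k) (fun u _ => u)); [|apply continuity_2d_pt_id1].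
    apply derivable_continuous_pt. exists (B (S k) X). apply Ho. apply Hd.
  - apply (continuity_1d_2d_pt_comp (A k) (fun _ v => v)); [|apply continuity_2d_pt_id2].
    apply derivable_continuous_pt. exists (A (S k) y). apply Ho. apply Hd.
  - apply continuity_2d_pt_const.
  - destruct Ho. apply continuity_2d_pt_plus; auto.
  - destruct Ho. apply continuity_2d_pt_mult; auto.
Qed.

Lemma comm_pt e X y : ev (dx (dp e)) X y = ev (dp (dx e)) X y.
Proof.
  induction e; simpl; try reflexivity; try ring.
  - rewrite IHe1, IHe2. reflexivity.
  - rewrite IHe1, IHe2. ring.
Qed.

Lemma dom2_open X y : dom2 I X y -> exists d, 0 < d /\ forall x, Rabs (x - X) < d -> dom2 I x y.
Proof.
  intros [HX Hy]. exists X. split; auto. intros x Hx. split; auto.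
  unfold Rabs in Hx; destruct (Rcase_abs (x - X)); lra.
Qed.
Lemma dom2_openp X y : dom2 I X y -> exists d, 0 < d /\ forall z, Rabs (z - y) < d -> dom2 I X z.
Proof.
  intros [HX Hy]. destruct (HIo y Hy) as [d [Hd H]]. exists d. split; auto. intros z Hz. split; auto.
Qed.

Lemma congr_dx e1 e2 : ok e1 -> ok e2 -> (forall X y, dom2 I X y -> ev e1 X y = ev e2 X y) ->
  forall X y, dom2 I X y -> ev (dx e1) X y = ev (dx e2) X y.
Proof.
  intros H1 H2 Heq X y Hd. apply (uniqueness_limite (fun x => ev e1 x y) X).
  - apply der_dx; auto.
  - apply loc_deriv with (fun x => ev e2 x y).
    + destruct (dom2_open X y Hd) as [d [Hd0 Hd1]]. exists d; split; auto.
    + apply der_dx; auto.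
Qed.
Lemma congr_dp e1 e2 : ok e1 -> ok e2 -> (forall X y, dom2 I X y -> ev e1 X y = ev e2 X y) ->
  forall X y, dom2 I X y -> ev (dp e1) X y = ev (dp e2) X y.
Proof.
  intros H1 H2 Heq X y Hd. apply (uniqueness_limite (fun z => ev e1 X z) y).
  - apply der_dp; auto.
  - apply loc_deriv with (fun z => ev e2 X z).
    + destruct (dom2_openp X y Hd) as [d [Hd0 Hd1]]. exists d; split; auto.
    + apply der_dp; auto.
Qed.

Definition iterX i e := Nat.iter i dx e.
Definition iterP j e := Nat.iter j dp e.

Lemma ok_iterX i e : ok e -> ok (iterX i e).
Proof. induction i; simpl; auto. intro; apply ok_dx; auto. Qed.
Lemma ok_iterP j e : ok e -> ok (iterP j e).
Proof. induction j; simpl; auto. intro; apply ok_dp; auto. Qed.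

Lemma iterX_S i e : iterX (S i) e = iterX i (dx e).
Proof. unfold iterX. induction i; simpl; auto. simpl in IHi. rewrite IHi. reflexivity. Qed.

Lemma congr_iterX i e1 e2 : ok e1 -> ok e2 -> (forall X y, dom2 I X y -> ev e1 X y = ev e2 X y) ->
  forall X y, dom2 I X y -> ev (iterX i e1) X y = ev (iterX i e2) X y.
Proof.
  induction i; simpl; auto. intros. apply congr_dx; try apply ok_iterX; auto.
Qed.

Lemma comm_iter i e : ok e -> forall X y, dom2 I X y -> ev (iterX i (dp e)) X y = ev (dp (iterX i e)) X y.
Proof.
  revert e. induction i; intros e Ho X y Hd; [reflexivity|].
  rewrite !iterX_S.
  transitivity (ev (iterX i (dp (dx e))) X y).
  - apply congr_iterX; auto; [apply ok_dx, ok_dp; auto|apply ok_dp, ok_dx; auto|].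
    intros; apply comm_pt.
  - apply IHi; auto. apply ok_dx; auto.
Qed.

Lemma smooth2_ev e : ok e -> smooth2 (dom2 I) (ev e).
Proof.
  intro Ho. exists (fun i j => ev (iterX i (iterP j e))). split; [reflexivity|].
  intros i j X y Hd. split; [|split].
  - apply c2_from, cont_ev; auto. apply ok_iterX, ok_iterP; auto.
  - change (ev (iterX (S i) (iterP j e)) X y) with (ev (dx (iterX i (iterP j e))) X y).
    apply der_dx; auto. apply ok_iterX, ok_iterP; auto.
  - change (iterP (S j) e) with (dp (iterP j e)).
    rewrite comm_iter; auto; [|apply ok_iterP; auto].
    apply der_dp; auto. apply ok_iterX, ok_iterP; auto.
Qed.

End S2.

Lemma sign_const S g : convex S -> (forall x, S x -> continuity_pt g x) ->
  (forall x, S x -> g x <> 0) -> forall a b, S a -> S b -> 0 < g a * g b.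
Proof.
  intros HS Hc Hn.
  assert (K : forall a b, S a -> S b -> a < b -> 0 < g a * g b).
  { intros a b Ha Hb Hab. destruct (Rlt_dec 0 (g a * g b)) as [?|Hle]; auto. exfalso.
    assert (Hcab : forall c, a <= c <= b -> S c) by (intros c Hc'; apply (HS a c b); tauto).
    pose proof (Hn a Ha). pose proof (Hn b Hb).
    destruct (Rlt_dec (g a) 0).
    - assert (0 < g b) by (destruct (Rtotal_order (g b) 0) as [?|[?|?]]; [nra|tauto|auto]).
      destruct (IVT_interv g a b (fun c Hc' => Hc c (Hcab c Hc')) Hab r H1) as [z [Hz1 Hz2]].
      apply (Hn z (Hcab z Hz1)); auto.
    - assert (0 < g a) by lra. assert (g b < 0) by (destruct (Rtotal_order (g b) 0) as [?|[?|?]]; [auto|tauto|nra]).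
      destruct (IVT_interv (fun x => - g x) a b (fun c Hc' => continuity_pt_opp _ _ (Hc c (Hcab c Hc'))) Hab)
        as [z [Hz1 Hz2]]; try lra.
      apply (Hn z (Hcab z Hz1)); lra. }
  intros a b Ha Hb. destruct (Rtotal_order a b) as [?|[?|?]].
  - auto.
  - subst. pose proof (Hn b Hb). assert (0 < g b * g b) by (apply Rsqr_pos_lt; auto). exact H0.
  - rewrite Rmult_comm; auto.
Qed.

Lemma sqrt_scale a X : 0 < X -> sqrt (2 * (exp (-2 * a) * X)) = exp (- a) * sqrt (2 * X).
Proof.
  intro HX. replace (2 * (exp (-2 * a) * X)) with ((exp (- a) * exp (- a)) * (2 * X)).
  - rewrite sqrt_mult_alt. rewrite sqrt_square. reflexivity.
    + left; apply exp_pos.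
    + assert (0 < exp (-a)) by apply exp_pos. nra.
  - rewrite <- exp_plus. replace (- a + - a) with (-2 * a) by ring. ring.
Qed.

Lemma reduces_derivs I L f G : openS I -> reduces_to I L f G ->
  forall X phi, dom2 I X phi ->
    dX L X phi = deriv1 G (exp (-2 * f phi) * X) * exp (-2 * f phi) /\
    dphi L X phi = deriv1 G (exp (-2 * f phi) * X) * (exp (-2 * f phi) * (-2 * deriv1 f phi) * X).
Proof.
  intros HIo [[Ff [Hf0 Hf]] [[FG [HG0 HG]] HL]] X phi [HX Hphi].
  set (Xt := exp (-2 * f phi) * X).
  assert (HXt : 0 < Xt) by (unfold Xt; pose proof (exp_pos (-2 * f phi)); nra).
  assert (dG : derivable_pt_lim G Xt (FG 1%nat Xt)) by (rewrite <- HG0; apply HG; exact HXt).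
  assert (df : derivable_pt_lim f phi (Ff 1%nat phi)) by (rewrite <- Hf0; apply Hf; exact Hphi).
  rewrite (deriv1_eq _ _ _ dG), (deriv1_eq _ _ _ df). split.
  - apply dX_eq. apply loc_deriv with (fun x => G (exp (-2 * f phi) * x)).
    + exists X. split; auto. intros x Hx. apply HL. split; auto.
      unfold Rabs in Hx; destruct (Rcase_abs (x - X)); lra.
    + pose proof (derivable_pt_lim_comp (fun x => exp (-2 * f phi) * x) G X (exp (-2 * f phi) * 1) _
        (derivable_pt_lim_scal _ _ _ _ (derivable_pt_lim_id X)) dG) as H.
      replace (FG 1%nat Xt * exp (-2 * f phi)) with (FG 1%nat Xt * (exp (-2 * f phi) * 1)) by ring.
      exact H.
  - apply dphi_eq. apply loc_deriv with (fun y => G (exp (-2 * f y) * X)).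
    + destruct (HIo phi Hphi) as [d [Hd Hd']]. exists d. split; auto. intros y Hy. apply HL. split; auto.
    + assert (Hin : derivable_pt_lim (fun y => exp (-2 * f y) * X) phi
                    (exp (-2 * f phi) * (-2 * Ff 1%nat phi) * X)).
      {
        pose proof (derivable_pt_lim_comp (fun y => -2 * f y) exp phi (-2 * Ff 1%nat phi) _
             (derivable_pt_lim_scal _ _ _ _ df) (derivable_pt_lim_exp (-2 * f phi))) as H1.
        pose proof (derivable_pt_lim_mult _ (fun _ => X) phi _ 0 H1 (derivable_pt_lim_const X phi)) as H2.
        unfold comp, mult_fct in H2. simpl in H2.
        replace (exp (-2 * f phi) * (-2 * Ff 1%nat phi) * X) with
          (exp (-2 * f phi) * (-2 * Ff 1%nat phi) * X + exp (-2 * f phi) * 0) by ring.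
        exact H2. }
      pose proof (derivable_pt_lim_comp _ G phi _ _ Hin dG) as H. exact H.
Qed.

Lemma pde_from_reduces I L f G : openS I -> reduces_to I L f G ->
  forall X phi, dom2 I X phi -> - dphi L X phi = 2 * X * dX L X phi * deriv1 f phi.
Proof.
  intros HIo Hr X phi Hd. destruct (reduces_derivs I L f G HIo Hr X phi Hd) as [H1 H2].
  rewrite H1, H2. ring.
Qed.

Section Main.
Variable I : R -> Prop.
Variable L : R -> R -> R.
Variable FL : nat -> nat -> R -> R -> R.
Hypothesis HIc : convex I.
Hypothesis HIo : openS I.
Hypothesis HF0 : FL O O = L.
Hypothesis HF : forall i j X y, dom2 I X y -> continuous2_at (FL i j) X y /\
       derivable_pt_lim (fun x => FL i j x y) X (FL (S i) j X y) /\
       derivable_pt_lim (fun z => FL i j X z) y (FL i (S j) X y).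
Hypothesis HLX : forall X phi, dom2 I X phi -> dX L X phi <> 0.

Lemma L_dX X y : dom2 I X y -> dX L X y = FL 1%nat 0%nat X y.
Proof. intro Hd. apply dX_eq. rewrite <- HF0. apply HF; auto. Qed.
Lemma L_dphi X y : dom2 I X y -> dphi L X y = FL 0%nat 1%nat X y.
Proof. intro Hd. apply dphi_eq. rewrite <- HF0. apply HF; auto. Qed.

Lemma FL10_nz X y : dom2 I X y -> FL 1%nat 0%nat X y <> 0.
Proof. intro Hd. rewrite <- L_dX; auto. Qed.

Lemma rho_eq X y : dom2 I X y -> rho L X y = 2 * X * FL 1%nat 0%nat X y - FL 0%nat 0%nat X y.
Proof. intro Hd. unfold rho. rewrite L_dX, HF0; auto. Qed.

Lemma rho_dX X y : dom2 I X y -> dX (rho L) X y = FL 1%nat 0%nat X y + 2 * X * FL 2%nat 0%nat X y.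
Proof.
  intro Hd. apply dX_eq.
  apply loc_deriv with (fun x => 2 * x * FL 1%nat 0%nat x y - FL 0%nat 0%nat x y).
  - destruct (dom2_open I X y Hd) as [d [Hd0 Hd1]]. exists d; split; auto.
    intros x Hx. apply rho_eq; auto.
  - pose proof (derivable_pt_lim_scal _ 2 _ _ (derivable_pt_lim_id X)) as H1.
    pose proof (derivable_pt_lim_mult _ (fun x => FL 1%nat 0%nat x y) X _ _ H1 (proj1 (proj2 (HF 1 0 X y Hd)))) as H2.
    pose proof (derivable_pt_lim_minus _ (fun x => FL 0%nat 0%nat x y) X _ _ H2 (proj1 (proj2 (HF 0 0 X y Hd)))) as H3.
    replace (FL 1%nat 0%nat X y + 2 * X * FL 2%nat 0%nat X y) with
      (2 * 1 * FL 1%nat 0%nat X y + mult_real_fct 2 id X * FL 2%nat 0%nat X y - FL 1%nat 0%nat X y)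
      by (unfold mult_real_fct, id; ring).
    exact H3.
Qed.

Lemma rho_dphi X y : dom2 I X y -> dphi (rho L) X y = 2 * X * FL 1%nat 1%nat X y - FL 0%nat 1%nat X y.
Proof.
  intro Hd. apply dphi_eq.
  apply loc_deriv with (fun z => 2 * X * FL 1%nat 0%nat X z - FL 0%nat 0%nat X z).
  - destruct (dom2_openp I HIo X y Hd) as [d [Hd0 Hd1]]. exists d; split; auto.
    intros z Hz. apply rho_eq; auto.
  - pose proof (derivable_pt_lim_scal _ (2 * X) _ _ (proj2 (proj2 (HF 1 0 X y Hd)))) as H1.
    pose proof (derivable_pt_lim_minus _ (fun z => FL 0%nat 0%nat X z) y _ _ H1 (proj2 (proj2 (HF 0 0 X y Hd)))) as H3.
    exact H3.
Qed.

Lemma rp_eq X y : dom2 I X y -> rho L X y + pres L X y = 2 * X * FL 1%nat 0%nat X y.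
Proof. intro Hd. rewrite rho_eq; auto. unfold pres. rewrite HF0. ring. Qed.

Lemma dom2_ball X y : dom2 I X y -> exists d, 0 < d /\ forall u v, Rabs (u - X) < d -> Rabs (v - y) < d -> dom2 I u v.
Proof.
  intros [HX Hy]. destruct (HIo y Hy) as [d [Hd H]].
  exists (Rmin X d). split; [apply Rmin_glb_lt; auto|].
  intros u v Hu Hv. split.
  - assert (Rabs (u - X) < X) by (eapply Rlt_le_trans; [exact Hu|apply Rmin_l]).
    unfold Rabs in H0; destruct (Rcase_abs (u - X)); lra.
  - apply H. eapply Rlt_le_trans; [exact Hv|apply Rmin_r].
Qed.

Lemma diffL X y : dom2 I X y -> differentiable_pt_lim L X y (FL 1%nat 0%nat X y) (FL 0%nat 1%nat X y).
Proof.
  intro Hd. apply diff_from_partials.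
  - destruct (dom2_ball X y Hd) as [d [Hd0 Hd1]]. exists d; split; auto.
    intros u v Hu Hv. rewrite <- HF0. apply HF; auto.
  - apply c2_to. apply HF; auto.
  - rewrite <- HF0. apply HF; auto.
Qed.

Lemma to_n f G : reduces_to I L f G -> exists n, isentropic_n I L n.
Proof.
  intro Hr. pose proof Hr as [Hf [HG HLG]].
  assert (HA : smooth1 I (fun y => exp (f y))) by (apply (smooth1_comp I (fun _ => True)); auto; apply smooth1_exp).
  assert (HB : smooth1 pos (fun x => sqrt (2 * x))).
  { apply (smooth1_comp pos pos); [apply smooth1_sqrt| apply smooth1_mul; [apply smooth1_const|apply smooth1_id]|].
    intros x Hx. unfold pos in *. lra. }
  destruct HA as [A [HA0 HA]], HB as [B [HB0 HB]].
  destruct Hf as [Ff [Hf0 Hf]].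
  set (e := EMul (EMul (EP A 0) (EX B 0)) (E2 FL 1 0)).
  assert (Hok : ok I e) by (simpl; repeat split; auto; intros; apply HF; auto).
  exists (ev e). split; [apply smooth2_ev; auto|].
  assert (Hev : forall X y, ev e X y = exp (f y) * sqrt (2 * X) * FL 1%nat 0%nat X y)
    by (intros; simpl; rewrite HA0, HB0; reflexivity).
  split.
  - intros X y Hd. rewrite Hev. pose proof (FL10_nz X y Hd). destruct Hd as [HX _].
    assert (0 < sqrt (2 * X)) by (apply sqrt_lt_R0; lra). pose proof (exp_pos (f y)).
    apply Rmult_integral_contrapositive; split; auto. apply Rmult_integral_contrapositive; split; lra.
  - intros X y Hd.
    assert (HX : 0 < X) by apply Hd. assert (Hy : I y) by apply Hd.
    assert (Hs : 0 < sqrt (2 * X)) by (apply sqrt_lt_R0; lra).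
    assert (Hss : sqrt (2 * X) * sqrt (2 * X) = 2 * X) by (apply sqrt_sqrt; lra).
    assert (He : 0 < exp (f y)) by apply exp_pos.
    pose proof (FL10_nz X y Hd) as Hnz.
    assert (HB1 : B 1%nat X = / sqrt (2 * X)).
    { apply (uniqueness_limite (B 0%nat) X). apply HB; auto.
      rewrite HB0.
      pose proof (derivable_pt_lim_comp (fun x => 2 * x) sqrt X (2 * 1) _
         (derivable_pt_lim_scal _ _ _ _ (derivable_pt_lim_id X)) (derivable_pt_lim_sqrt (2 * X) ltac:(lra))) as H.
      replace (/ sqrt (2 * X)) with (/ (2 * sqrt (2 * X)) * (2 * 1)) by (field; lra). exact H. }
    assert (HA1 : A 1%nat y = exp (f y) * deriv1 f y).
    { apply (uniqueness_limite (A 0%nat) y). apply HA; auto.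
      assert (df : derivable_pt_lim f y (Ff 1%nat y)) by (rewrite <- Hf0; apply Hf; auto).
      rewrite (deriv1_eq _ _ _ df), HA0.
      pose proof (derivable_pt_lim_comp f exp y _ _ df (derivable_pt_lim_exp (f y))) as H.
      exact H. }
    pose proof (pde_from_reduces I L f G HIo Hr X y Hd) as Hpde.
    rewrite L_dphi, L_dX in Hpde by auto.
    rewrite rho_dX, rho_dphi, rp_eq, Hev by auto.
    rewrite (dX_eq _ _ _ _ (der_dx I e Hok X y Hd)), (dphi_eq _ _ _ _ (der_dp I e Hok X y Hd)).
    simpl. rewrite HA0, HB0, HB1, HA1. split.
    + set (s := sqrt (2 * X)) in *. rewrite <- Hss. field. repeat split; lra.

    + replace (FL 0%nat 1%nat X y) with (- (2 * X * FL 1%nat 0%nat X y * deriv1 f y)) by lra.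
      field. split; [auto|]. split; lra.
Qed.
End Main.

Section Main2.
Variable I : R -> Prop.
Variable L : R -> R -> R.
Variable FL : nat -> nat -> R -> R -> R.
Hypothesis HIc : convex I.
Hypothesis HIo : openS I.
Hypothesis HF0 : FL O O = L.
Hypothesis HF : forall i j X y, dom2 I X y -> continuous2_at (FL i j) X y /\
       derivable_pt_lim (fun x => FL i j x y) X (FL (S i) j X y) /\
       derivable_pt_lim (fun z => FL i j X z) y (FL i (S j) X y).
Hypothesis HLX : forall X phi, dom2 I X phi -> dX L X phi <> 0.

Lemma from_n n : isentropic_n I L n ->
  exists f G (s : R), reduces_to I L f G /\ (s = 1 \/ s = -1) /\
       forall X phi, dom2 I X phi ->
         n X phi = s * exp (f phi) * sqrt (2 * X) * dX L X phi /\
         n X phi = s * sqrt (2 * (exp (-2 * f phi) * X))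
                     * deriv1 G (exp (-2 * f phi) * X).
Proof.
  intros [[Fn [Hn0 HFn]] [Hnz Heq]].
  pose proof (rho_dX I L FL HF0 HF) as RX. pose proof (rho_dphi I L FL HIo HF0 HF) as RP.
  pose proof (rp_eq I L FL HF0 HF) as RPE.
  assert (HnX : forall X y, dom2 I X y -> derivable_pt_lim (fun x => n x y) X (Fn 1%nat 0%nat X y))
    by (intros; rewrite <- Hn0; apply HFn; auto).
  assert (HnP : forall X y, dom2 I X y -> derivable_pt_lim (fun z => n X z) y (Fn 0%nat 1%nat X y))
    by (intros; rewrite <- Hn0; apply HFn; auto).
  assert (EqX : forall X y, dom2 I X y -> FL 1%nat 0%nat X y + 2 * X * FL 2%nat 0%nat X y =
             2 * X * FL 1%nat 0%nat X y * Fn 1%nat 0%nat X y / n X y).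
  { intros X y Hd. destruct (Heq X y Hd) as [H _].
    rewrite RX, RPE, (dX_eq _ _ _ _ (HnX X y Hd)) in H by auto. exact H. }
  assert (EqP : forall X y, dom2 I X y -> 2 * X * FL 1%nat 1%nat X y - FL 0%nat 1%nat X y =
             2 * X * FL 1%nat 0%nat X y * Fn 0%nat 1%nat X y / n X y).
  { intros X y Hd. destruct (Heq X y Hd) as [_ H].
    rewrite RP, RPE, (dphi_eq _ _ _ _ (HnP X y Hd)) in H by auto. exact H. }
  destruct (classic (exists y0, I y0)) as [[y0 Hy0]|Hne].
  2:{ exists (fun _ => 0), (fun _ => 0), 1. split; [split; [apply smooth1_const|split; [apply smooth1_const|]]|split; [left; reflexivity|]];
      intros X y [_ Hy]; exfalso; apply Hne; eauto. }
  set (r := fun X y => n X y / (sqrt (2 * X) * FL 1%nat 0%nat X y)).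
  assert (r_const : forall X y, dom2 I X y -> r X y = r 1 y).
  { intros X y Hd. apply (const_on_convex (fun x => 0 < x) (fun x => r x y)).
    - intros a b c Ha Hc Hab Hbc; lra.
    - intros x Hx. assert (Hdx : dom2 I x y) by (split; auto; apply Hd).
      assert (Hs : 0 < sqrt (2 * x)) by (apply sqrt_lt_R0; lra).
      assert (Hss : sqrt (2 * x) * sqrt (2 * x) = 2 * x) by (apply sqrt_sqrt; lra).
      pose proof (FL10_nz I L FL HF0 HF HLX x y Hdx) as Hnz1.
      pose proof (Hnz x y Hdx) as Hnz2.
      assert (HB : derivable_pt_lim (fun x => sqrt (2 * x)) x (/ sqrt (2 * x))).
      { pose proof (derivable_pt_lim_comp (fun x => 2 * x) sqrt x (2 * 1) _
          (derivable_pt_lim_scal _ _ _ _ (derivable_pt_lim_id x)) (derivable_pt_lim_sqrt (2 * x) ltac:(lra))) as H.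
        replace (/ sqrt (2 * x)) with (/ (2 * sqrt (2 * x)) * (2 * 1)) by (field; lra). exact H. }
      pose proof (derivable_pt_lim_mult _ _ x _ _ HB (proj1 (proj2 (HF 1 0 x y Hdx)))) as H2.
      assert (Hden : sqrt (2 * x) * FL 1%nat 0%nat x y <> 0) by (apply Rmult_integral_contrapositive; split; lra).
      pose proof (derivable_pt_lim_div (fun x => n x y) _ x _ _ (HnX x y Hdx) H2 Hden) as H3.
      replace 0 with ((Fn 1%nat 0%nat x y * (sqrt (2 * x) * FL 1%nat 0%nat x y) -
                       (/ sqrt (2 * x) * FL 1%nat 0%nat x y + sqrt (2 * x) * FL 2%nat 0%nat x y) * n x y) /
                       (sqrt (2 * x) * FL 1%nat 0%nat x y)²).
      + exact H3.
      + pose proof (EqX x y Hdx) as E.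
        assert (E' : Fn 1%nat 0%nat x y = (FL 1%nat 0%nat x y + 2 * x * FL 2%nat 0%nat x y) * n x y / (2 * x * FL 1%nat 0%nat x y)).
        { rewrite E. field. split; [auto|split; lra]. }
        rewrite E'. set (s := sqrt (2 * x)) in *. rewrite <- Hss. unfold Rsqr. field. repeat split; try lra; auto.
    - apply Hd.
    - lra. }
  set (g := fun y => n 1 y * FL 1%nat 0%nat 1 y).
  assert (Hg : forall a b, I a -> I b -> 0 < g a * g b).
  { apply sign_const; auto.
    - intros y Hy. assert (Hd : dom2 I 1 y) by (split; auto; lra). unfold g.
      apply continuity_pt_mult; apply derivable_continuous_pt.
      + exists (Fn 0%nat 1%nat 1 y). apply HnP; auto.
      + exists (FL 1%nat 1%nat 1 y). apply HF; auto.
    - intros y Hy. assert (Hd : dom2 I 1 y) by (split; auto; lra). unfold g.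
      apply Rmult_integral_contrapositive; split; [apply Hnz; auto|apply (FL10_nz I L FL HF0 HF HLX); auto]. }
  set (s := if Rlt_dec 0 (g y0) then 1 else -1).
  assert (Hs1 : s = 1 \/ s = -1) by (unfold s; destruct (Rlt_dec 0 (g y0)); auto).
  assert (Hss1 : s * s = 1) by (destruct Hs1 as [-> | ->]; ring).
  assert (Hsg : forall y, I y -> 0 < s * g y).
  { intros y Hy. pose proof (Hg y0 y Hy0 Hy). pose proof (Hg y0 y0 Hy0 Hy0).
    unfold s. destruct (Rlt_dec 0 (g y0)); nra. }
  assert (Hsr : forall y, I y -> 0 < s * r 1 y).
  { intros y Hy. assert (Hd : dom2 I 1 y) by (split; auto; lra).
    pose proof (FL10_nz I L FL HF0 HF HLX 1 y Hd).
    assert (Hs2 : 0 < sqrt (2 * 1)) by (apply sqrt_lt_R0; lra).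
    replace (s * r 1 y) with (s * g y / (sqrt (2 * 1) * (FL 1%nat 0%nat 1 y)²)).
    - apply Rdiv_lt_0_compat; [apply Hsg; auto|]. apply Rmult_lt_0_compat; auto. apply Rsqr_pos_lt; auto.
    - unfold r, g, Rsqr. field. split; lra. }
  set (f := fun y => ln (s * r 1 y)).
  assert (Hfs : smooth1 I f).
  { apply (smooth1_comp I pos ln (fun y => s * r 1 y)); [apply smooth1_ln| |exact Hsr].
    apply smooth1_mul; [apply smooth1_const|]. unfold r, Rdiv.
    apply smooth1_mul.
    - exists (fun k z => Fn 0%nat k 1 z). split; [rewrite Hn0; reflexivity|].
      intros k z Hz. apply HFn. split; auto; lra.
    - apply (smooth1_comp I (fun x => x <> 0) (fun x => / x)); [apply smooth1_inv| |].
      + apply smooth1_mul; [apply smooth1_const|].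
        exists (fun k z => FL 1%nat k 1 z). split; [reflexivity|].
        intros k z Hz. apply HF. split; auto; lra.
      + intros z Hz. assert (Hd : dom2 I 1 z) by (split; auto; lra).
        pose proof (FL10_nz I L FL HF0 HF HLX 1 z Hd).
        assert (0 < sqrt (2 * 1)) by (apply sqrt_lt_R0; lra).
        apply Rmult_integral_contrapositive; split; lra. }
  assert (Hexpf : forall y, I y -> exp (f y) = s * r 1 y) by (intros; unfold f; apply exp_ln; auto).
  assert (Hnform : forall X y, dom2 I X y -> n X y = s * exp (f y) * sqrt (2 * X) * FL 1%nat 0%nat X y).
  { intros X y Hd. rewrite Hexpf by apply Hd. rewrite <- (r_const X y Hd).
    assert (0 < sqrt (2 * X)) by (apply sqrt_lt_R0; destruct Hd; lra).
    pose proof (FL10_nz I L FL HF0 HF HLX X y Hd).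
    unfold r. replace (s * (s * (n X y / (sqrt (2 * X) * FL 1%nat 0%nat X y))) * sqrt (2 * X) * FL 1%nat 0%nat X y) with ((s * s) * n X y) by (field; repeat split; try lra; auto). rewrite Hss1; ring. }
  destruct Hfs as [Ff [Hf0 Hf]].
  assert (df : forall y, I y -> derivable_pt_lim f y (Ff 1%nat y)) by (intros; rewrite <- Hf0; apply Hf; auto).
  assert (Hpde : forall X y, dom2 I X y -> - FL 0%nat 1%nat X y = 2 * X * FL 1%nat 0%nat X y * Ff 1%nat y).
  { intros X y Hd.
    assert (HX : 0 < X) by apply Hd. assert (Hy : I y) by apply Hd.
    assert (Hs : 0 < sqrt (2 * X)) by (apply sqrt_lt_R0; lra).
    pose proof (FL10_nz I L FL HF0 HF HLX X y Hd) as Hnz1.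
    pose proof (exp_pos (f y)) as He.
    assert (HD : Fn 0%nat 1%nat X y = s * (exp (f y) * Ff 1%nat y) * sqrt (2 * X) * FL 1%nat 0%nat X y
                   + s * exp (f y) * sqrt (2 * X) * FL 1%nat 1%nat X y).
    { apply (uniqueness_limite (fun z => n X z) y); [apply HnP; auto|].
      apply (loc_deriv (fun z => n X z) (fun z => (s * exp (f z) * sqrt (2 * X)) * FL 1%nat 0%nat X z)).
      - destruct (dom2_openp I HIo X y Hd) as [d [Hd0 Hd1]]. exists d; split; auto.
      - pose proof (derivable_pt_lim_comp f exp y _ _ (df y Hy) (derivable_pt_lim_exp (f y))) as H1.
        pose proof (derivable_pt_lim_scal _ s _ _ H1) as H2.
        pose proof (derivable_pt_lim_mult _ (fun _ => sqrt (2 * X)) y _ _ H2 (derivable_pt_lim_const _ y)) as H3.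
        pose proof (derivable_pt_lim_mult _ _ y _ _ H3 (proj2 (proj2 (HF 1 0 X y Hd)))) as H4.
        unfold mult_fct, mult_real_fct, comp in H4.
        replace (s * (exp (f y) * Ff 1%nat y) * sqrt (2 * X) * FL 1%nat 0%nat X y +
                 s * exp (f y) * sqrt (2 * X) * FL 1%nat 1%nat X y) with
          ((s * (exp (f y) * Ff 1%nat y) * sqrt (2 * X) + s * exp (f y) * 0) * FL 1%nat 0%nat X y +
           s * exp (f y) * sqrt (2 * X) * FL 1%nat 1%nat X y) by ring.
        exact H4. }
    pose proof (EqP X y Hd) as E. rewrite HD, Hnform in E by auto.
    assert (Hsn : s <> 0) by (destruct Hs1 as [-> | ->]; lra).
    replace (FL 0%nat 1%nat X y) with
      (2 * X * FL 1%nat 1%nat X y - 2 * X * FL 1%nat 0%nat X y *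
        (s * (exp (f y) * Ff 1%nat y) * sqrt (2 * X) * FL 1%nat 0%nat X y +
         s * exp (f y) * sqrt (2 * X) * FL 1%nat 1%nat X y) /
        (s * exp (f y) * sqrt (2 * X) * FL 1%nat 0%nat X y)) by lra.
    field. repeat split; lra. }
  assert (HK : forall c, 0 < c -> forall y, I y -> L (c * exp (2 * f y)) y = L (c * exp (2 * f y0)) y0).
  { intros c Hc y1 Hy1. apply (const_on_convex I (fun y => L (c * exp (2 * f y)) y)); auto.
    intros y Hy.
    assert (Hd : dom2 I (c * exp (2 * f y)) y) by (split; auto; pose proof (exp_pos (2 * f y)); nra).
    assert (Hin : derivable_pt_lim (fun z => c * exp (2 * f z)) y (c * (exp (2 * f y) * (2 * Ff 1%nat y)))).
    { pose proof (derivable_pt_lim_comp (fun z => 2 * f z) exp y _ _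
        (derivable_pt_lim_scal _ 2 _ _ (df y Hy)) (derivable_pt_lim_exp (2 * f y))) as H1.
      pose proof (derivable_pt_lim_scal _ c _ _ H1) as H2.
      unfold mult_real_fct, comp in H2. 
      replace (c * (exp (2 * f y) * (2 * Ff 1%nat y))) with (c * (exp (2 * f y) * (2 * Ff 1%nat y))) by ring.
      exact H2. }
    pose proof (derivable_pt_lim_comp_2d L _ (fun z => z) y _ _ _ _ (diffL I L FL HIo HF0 HF _ _ Hd) Hin (derivable_pt_lim_id y)) as H.
    replace 0 with (FL 1%nat 0%nat (c * exp (2 * f y)) y * (c * (exp (2 * f y) * (2 * Ff 1%nat y))) +
                    FL 0%nat 1%nat (c * exp (2 * f y)) y * 1).
    - exact H.
    - pose proof (Hpde _ _ Hd). nra. }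
  set (G := fun Y => L (Y * exp (2 * f y0)) y0).
  assert (Hred : reduces_to I L f G).
  { split; [exists Ff; split; auto|split].
    - apply (smooth1_comp pos pos (fun x => L x y0) (fun Y => Y * exp (2 * f y0))).
      + exists (fun k x => FL k 0%nat x y0). split; [rewrite HF0; reflexivity|].
        intros k x Hx. apply HF. split; auto.
      + apply smooth1_mul; [apply smooth1_id|apply smooth1_const].
      + intros x Hx. unfold pos in *. pose proof (exp_pos (2 * f y0)). nra.
    - intros X y Hd. unfold G.
      assert (Hc : 0 < exp (-2 * f y) * X) by (destruct Hd; pose proof (exp_pos (-2 * f y)); nra).
      rewrite <- (HK _ Hc y (proj2 Hd)).
      f_equal. rewrite (Rmult_comm _ X), Rmult_assoc, <- exp_plus. replace (-2 * f y + 2 * f y) with 0 by ring.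
      rewrite exp_0. ring. }
  exists f, G, s. split; [exact Hred|split; [exact Hs1|]].
  intros X y Hd.
  assert (Hn1 : n X y = s * exp (f y) * sqrt (2 * X) * dX L X y) by (rewrite (L_dX I L FL HF0 HF); auto).
  split; [exact Hn1|].
  destruct (reduces_derivs I L f G HIo Hred X y Hd) as [H1 _].
  rewrite Hn1, H1, sqrt_scale by (apply Hd).
  replace (exp (- f y)) with (exp (f y) * exp (-2 * f y)) by (rewrite <- exp_plus; f_equal; ring).
  ring.
Qed.
End Main2.

Theorem mainTheorem1 (I : R -> Prop) (L : R -> R -> R)
  (HI : is_open_intvl I)
  (HL : smooth2 (dom2 I) L)
  (HLX : forall X phi, dom2 I X phi -> dX L X phi <> 0) :
  ((exists n, isentropic_n I L n) <-> (exists f G, reduces_to I L f G)) /\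
  (forall n, isentropic_n I L n ->
     exists f G (s : R), reduces_to I L f G /\ (s = 1 \/ s = -1) /\
       forall X phi, dom2 I X phi ->
         n X phi = s * exp (f phi) * sqrt (2 * X) * dX L X phi /\
         n X phi = s * sqrt (2 * (exp (-2 * f phi) * X))
                     * deriv1 G (exp (-2 * f phi) * X)) /\
  (forall f G, reduces_to I L f G ->
     forall X phi, dom2 I X phi ->
       - dphi L X phi = 2 * X * dX L X phi * deriv1 f phi).
Proof.
  destruct HI as [HIc HIo].
  destruct HL as [FL [HF0 HF]].
  split; [split|split].
  - intros [n Hn]. destruct (from_n I L FL HIc HIo HF0 HF HLX n Hn) as [f [G [s [Hr _]]]].
    exists f, G; exact Hr.
  - intros [f [G Hr]]. exact (to_n I L FL HIo HF0 HF HLX f G Hr).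
  - intros n Hn. exact (from_n I L FL HIc HIo HF0 HF HLX n Hn).
  - intros f G Hr. exact (pde_from_reduces I L f G HIo Hr).
Qed.
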